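(* Let $q$ be a self-join-free Boolean conjunctive query such that $q$ is saturated and the attack graph of $q$ contains no strong cycle. Let $\mathcal{S}$ be an initial strong component in the attack graph of $q$ with $|\mathcal{S}|\ge 2$. Then for every atom $F\in\mathcal{S}$ there exists an atom $H\in\mathcal{S}$ such that $F\to H$ is an edge of the M-graph of $q$.
   Context: Every relation name has a signature $[n,k]$ ($1\le k\le n$; primary-key positions $1,\dots,k$) and a mode in $\{\mathsf{c},\mathsf{i}\}$. For an atom $F$, $\mathrm{key}(F)$ = variables at primary-key positions, $\mathrm{vars}(F)$ = all its variables. A self-join-free Boolean conjunctive query is a finite set of atoms with distinct relation names. $\mathcal{K}(p)=\{\mathrm{key}(F)\to\mathrm{vars}(F)\mid F\in p\}$; $q^{\mathsf{c}}$ = atoms of mode $\mathsf{c}$; $F^{+,q}$ = variables $x$ with $\mathcal{K}(q\setminus\{F\})\cup\mathcal{K}(q^{\mathsf{c}})\models\mathrm{key}(F)\to x$. Attack graph: vertices atoms of $q$, edge $F\to G$ ($F\ne G$) iff there are atoms $F_0=F,\dots,F_\ell=G$ of $q$ and variables $x_i\in(\mathrm{vars}(F_{i-1})\cap\mathrm{vars}(F_i))\setminus F^{+,q}$. Attack weak if $\mathcal{K}(q)\models\mathrm{key}(F)\to\mathrm{key}(G)$, else strong; a cycle is strong if it contains a strong attack. A strong component is initial if no edge enters it from another strong component. $F$ attacks a variable $x$ if $F$ attacks $N(x)$ in $q\cup\{N(x)\}$ ($N$ fresh, signature $[1,1]$). A sequential proof for $\mathcal{K}(q)\models Z\to w$: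 atoms $F_1,\dots,F_\ell$ of $q$ with $\mathrm{key}(F_i)\subseteq Z\cup\bigcup_{j<i}\mathrm{vars}(F_j)$ and $w\in\mathrm{vars}(F_k)$ for some $k$. $Z\to w$ is internal to $q$ if some such proof has no atom attacking a variable of $Z\cup\{w\}$ and $Z\subseteq\mathrm{vars}(F)$ for some $F\in q$. $q$ is saturated if $\mathcal{K}(q^{\mathsf{c}})\models\sigma$ for every $\sigma$ internal to $q$. The M-graph of $q$: vertices atoms of $q$, edge $F\to G$ ($F\ne G$) iff $\mathcal{K}(q^{\mathsf{c}})\models\mathrm{vars}(F)\to\mathrm{key}(G)$. *)

(* Defs.v *)
From mathcomp Require Import all_boot.
Set Implicit Arguments. Unset Strict Implicit. Unset Printing Implicit Defensive.

(* A term is a variable (inl x) or a constant (inr c). *)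
Definition term := (nat + nat)%type.

(* An atom: (relation name, terms at primary-key positions 1..k,
   terms at the remaining positions k+1..n, mode) ; mode true = c, false = i.
   Its signature is [k + size rest, k]. *)
Definition atom := (nat * seq term * seq term * bool)%type.
Definition aname (F : atom) : nat := F.1.1.1.
Definition akey (F : atom) : seq term := F.1.1.2.
Definition arest (F : atom) : seq term := F.1.2.
Definition amode (F : atom) : bool := F.2.

Definition tvars (ts : seq term) : seq nat :=
  pmap (fun t => match t with inl x => Some x | inr _ => None end) ts.

Definition key (F : atom) : seq nat := tvars (akey F).
Definition vars (F : atom) : seq nat := tvars (akey F ++ arest F).

Definition query := seq atom.

Definition sjf_bcq (q : query) : Prop :=
  uniq (map aname q) /\ (forall F, F \in q -> 0 < size (akey F)).

Definition fd := (seq nat * seq nat)%type.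
Definition Kset (p : query) : seq fd := [seq (key F, vars F) | F <- p].
Definition cpart (q : query) : query := [seq F <- q | amode F].
Definition remove (q : query) (F : atom) : query := [seq G <- q | G != F].

Inductive closure (K : seq fd) (Z : seq nat) : nat -> Prop :=
| cl_base x : x \in Z -> closure K Z x
| cl_step (f : fd) y :
    f \in K -> (forall x, x \in f.1 -> closure K Z x) -> y \in f.2 ->
    closure K Z y.

Definition entails (K : seq fd) (Z : seq nat) (w : nat) : Prop := closure K Z w.
Definition entails_set (K : seq fd) (Z Y : seq nat) : Prop :=
  forall y, y \in Y -> entails K Z y.

Definition plus (q : query) (F : atom) (x : nat) : Prop :=
  entails (Kset (remove q F) ++ Kset (cpart q)) (key F) x.

Inductive attack_path (q : query) (F : atom) : atom -> Prop :=
| ap_start : attack_path q F F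
| ap_step G H x :
    attack_path q F G -> H \in q -> x \in vars G -> x \in vars H ->
    ~ plus q F x -> attack_path q F H.

Definition attacks (q : query) (F G : atom) : Prop :=
  [/\ F \in q, G \in q, F != G & attack_path q F G].

Definition weak_attack (q : query) (F G : atom) : Prop :=
  attacks q F G /\ entails_set (Kset q) (key F) (key G).
Definition strong_attack (q : query) (F G : atom) : Prop :=
  attacks q F G /\ ~ entails_set (Kset q) (key F) (key G).

Inductive reach (q : query) : atom -> atom -> Prop :=
| reach_refl F : reach q F F
| reach_step F G H : attacks q F G -> reach q G H -> reach q F H.

Definition has_strong_cycle (q : query) : Prop :=
  exists F G, strong_attack q F G /\ reach q G F.

Definition strong_component (q : query) (S : seq atom) : Prop :=
  [/\ S != [::], {subset S <= q},
      (forall F G, F \in S -> G \in S -> reach q F G) &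
      (forall F G, F \in S -> G \in q -> reach q F G -> reach q G F -> G \in S)].

Definition initial_component (q : query) (S : seq atom) : Prop :=
  strong_component q S /\
  (forall G H, G \in q -> G \notin S -> H \in S -> ~ attacks q G H).

(* fresh atom N(x) with signature [1,1] (its mode is immaterial) *)
Definition fresh_name (q : query) : nat := (foldr maxn 0 (map aname q)).+1.
Definition Natom (q : query) (x : nat) : atom :=
  (fresh_name q, [:: inl x], [::], false).

Definition attacks_var (q : query) (F : atom) (x : nat) : Prop :=
  attacks (Natom q x :: q) F (Natom q x).

Definition dummy_atom : atom := (0, [::], [::], false).

Definition seq_proof (q : query) (Z : seq nat) (w : nat) (Fs : seq atom) : Prop :=
  [/\ {subset Fs <= q},
      (forall i, i < size Fs ->
         {subset key (nth dummy_atom Fs i) <= Z ++ flatten (map vars (take i Fs))}) &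
      (exists2 F, F \in Fs & w \in vars F)].

Definition internal (q : query) (Z : seq nat) (w : nat) : Prop :=
  (exists Fs, seq_proof q Z w Fs /\
     forall F x, F \in Fs -> x \in w :: Z -> ~ attacks_var q F x) /\
  (exists2 F, F \in q & {subset Z <= vars F}).

Definition saturated (q : query) : Prop :=
  forall Z w, internal q Z w -> entails (Kset (cpart q)) Z w.

Definition medge (q : query) (F G : atom) : Prop :=
  [/\ F \in q, G \in q, F != G & entails_set (Kset (cpart q)) (vars F) (key G)].

(* Main.v *)
From Stdlib Require Import Classical.
Require Import Defs.
From mathcomp Require Import all_boot.
Set Implicit Arguments. Unset Strict Implicit. Unset Printing Implicit Defensive.

Lemma closure_mono (K1 K2 : seq fd) Z y : {subset K1 <= K2} -> Defs.closure K1 Z y -> Defs.closure K2 Z y.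
Proof.
move=> sub h; elim: h => [x xZ | f y' fK _ IH yf]; first exact: cl_base.
by apply: (cl_step (f:=f)) => //; apply: sub.
Qed.

Lemma key_sub_vars F x : x \in key F -> x \in vars F.
Proof. by rewrite /vars /key /tvars pmap_cat mem_cat => ->. Qed.

Lemma Kset_sub p1 p2 : {subset p1 <= p2} -> {subset Kset p1 <= Kset p2}.
Proof. by move=> sub f /mapP [A Ap ->]; apply/mapP; exists A => //; apply: sub. Qed.

Definition valid (Z : seq nat) (Fs : seq atom) :=
  forall i, i < size Fs ->
    {subset key (nth dummy_atom Fs i) <= Z ++ flatten (map vars (take i Fs))}.

Lemma valid_cat Z s1 s2 : valid Z s1 -> valid Z s2 -> valid Z (s1 ++ s2).
Proof.
move=> v1 v2 i; rewrite size_cat nth_cat take_cat => lt12.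
case: (ltnP i (size s1)) => [lt1 | le1].
  by apply: v1.
have lt2' : i - size s1 < size s2 by rewrite ltn_subLR.
move=> x /(v2 _ lt2'); rewrite !mem_cat map_cat flatten_cat mem_cat.
by case/orP => ->; rewrite ?orbT.
Qed.

Lemma valid1 Z s A : {subset key A <= Z ++ flatten (map vars s)} -> valid Z [:: A].
Abort.

Lemma valid_rcons Z s A : valid Z s -> {subset key A <= Z ++ flatten (map vars s)} ->
  valid Z (s ++ [:: A]).
Proof.
move=> v kA i; rewrite size_cat /= addn1 ltnS nth_cat take_cat => le2.
case: (ltnP i (size s)) => [lt1 | le1]; first by apply: v.
have -> : i = size s by apply/eqP; rewrite eqn_leq le1 le2.
rewrite subnn /= cats0; exact: kA.
Qed.

Lemma closure_seq P Z u : Defs.closure (Kset P) Z u ->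
  exists Fs, [/\ {subset Fs <= P}, valid Z Fs & u \in Z ++ flatten (map vars Fs)].
Proof.
elim => [x xZ | f y fK _ IH yf].
  by exists [::]; split => //; rewrite cats0.
case/mapP: fK => A AP fE; subst f.
have: forall s : seq nat, {subset s <= key A} -> exists Fs, [/\ {subset Fs <= P}, valid Z Fs &
   {subset s <= Z ++ flatten (map vars Fs)}].
  elim => [|x s IHs] sub.
    by exists [::]; split => // i; rewrite ltn0.
  have [|Fs2 [s2 v2 c2]] := IHs; first by move=> z zs; apply: sub; rewrite inE zs orbT.
  have [Fs1 [s1 v1 c1]] := IH x (sub x (mem_head _ _)).
  exists (Fs1 ++ Fs2); split.
  - by move=> B; rewrite mem_cat => /orP [] ?; [apply: s1 | apply: s2].
  - exact: valid_cat.
  - move=> z; rewrite inE => /orP [/eqP -> | zs].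
      by move: c1; rewrite !mem_cat map_cat flatten_cat mem_cat; case/orP => ->; rewrite ?orbT.
    by move: (c2 z zs); rewrite !mem_cat map_cat flatten_cat mem_cat; case/orP => ->; rewrite ?orbT.
case/(_ (key A) (fun x h => h)) => Fs [sP v c].
exists (Fs ++ [:: A]); split.
- by move=> B; rewrite mem_cat => /orP [/sP // | ]; rewrite mem_seq1 => /eqP ->.
- exact: valid_rcons.
- by rewrite map_cat flatten_cat /= cats0 !mem_cat yf !orbT.
Qed.

Lemma attvar_attacks q A B y : A \in q -> B \in q -> A != B -> y \in vars B ->
  attacks_var q A y -> attacks q A B.
Proof.
move=> Aq Bq AB yB [_ _ AN P].
set N := Natom q y in AN P.
have vN : vars N = [:: y] by [].
have pm : forall x, plus q A x -> plus (N :: q) A x.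
  move=> x; apply: closure_mono => f; rewrite !mem_cat => /orP [h|h].
    apply/orP; left; move: h; apply: Kset_sub => C.
    by rewrite /remove !mem_filter inE => /andP [-> ->]; rewrite orbT.
  by apply/orP; right.
have claim : forall K, attack_path (N :: q) A K ->
  (K != N -> attack_path q A K) /\
  (K = N -> exists G, [/\ attack_path q A G, y \in vars G & ~ plus q A y]).
  move=> K; elim => [| G H x _ [IH1 IH2] Hq xG xH npx].
    split => [_|eAN]; first exact: ap_start.
    by move: AN; rewrite eAN eqxx.
  have npx' : ~ plus q A x by move=> /pm.
  case: (eqVneq H N) => [HN | HN].
    subst H; rewrite vN mem_seq1 in xH; move/eqP: xH => xy; subst x.
    split => // _.
    case: (eqVneq G N) => [GN | GN]; first exact: IH2.
    by exists G; split => //; apply: IH1.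
  have Hq' : H \in q by move: Hq; rewrite inE (negbTE HN).
  split => [_|HN']; last by move: HN; rewrite HN' eqxx.
  case: (eqVneq G N) => [GN | GN].
    subst G; rewrite vN mem_seq1 in xG; move/eqP: xG => xy; subst x.
    have [G0 [p0 yG0 np0]] := IH2 erefl.
    exact: (ap_step p0 Hq' yG0 xH np0).
  exact: (ap_step (IH1 GN) Hq' xG xH npx').
have [_ /(_ erefl) [G1 [p1 yG1 np1]]] := claim N P.
split => //; exact: (ap_step p1 Bq yG1 yB np1).
Qed.

Lemma reach_trans q F G H : reach q F G -> reach q G H -> reach q F H.
Proof. elim => // F1 G1 H1 a _ IH r; exact: (reach_step a (IH r)). Qed.

Lemma closure_remove q F y : Defs.closure (Kset q) (key F) y ->
  Defs.closure (Kset (remove q F)) (vars F) y.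
Proof.
elim => [x xk | f y' fK _ IH yf]; first by apply: cl_base; apply: key_sub_vars.
case/mapP: fK => A Aq fE; subst f.
case: (eqVneq A F) => [AF | AF].
  by subst A; apply: cl_base.
apply: (cl_step (f := (key A, vars A))) => //.
by apply/mapP; exists A => //; rewrite mem_filter AF Aq.
Qed.

Theorem lemma29 (q : query) (S : seq atom) :
  sjf_bcq q -> saturated q -> ~ has_strong_cycle q ->
  initial_component q S -> uniq S -> 2 <= size S ->
  forall F, F \in S -> exists2 H, H \in S & medge q F H.
Proof.
move=> _ sat nsc [[_ Sq Sreach Sclosed] init] uS szS F FS.
have [G GS GF] : exists2 G, G \in S & G != F.
  case: (boolP (has (predC1 F) S)) => [/hasP // | /hasPn Hall].
  have sub : {subset S <= [:: F]}.
    by move=> x /Hall; rewrite /= negbK => /eqP ->; rewrite mem_seq1.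
  by have := uniq_leq_size uS sub; rewrite /= leqNgt szS.
have : reach q F G by apply: Sreach.
have inv : forall F' G', reach q F' G' -> F' != G' ->
    exists G1, attacks q F' G1 /\ reach q G1 G'.
  move=> F' G'; case => [F0|F0 G0 H0 a r]; first by rewrite eqxx.
  by move=> _; exists G0.
have FG : F != G by rewrite eq_sym.
move=> /inv /(_ FG) [G1 [aFG1 rG1G]].
have G1q : G1 \in q by case: aFG1.
have rG1F : reach q G1 F by apply: (reach_trans rG1G); apply: Sreach.
have G1S : G1 \in S.
  by apply: (Sclosed F) => //; exact: (reach_step aFG1 (reach_refl _ _)).
have weak : entails_set (Kset q) (key F) (key G1).
  apply: NNPP => nw; apply: nsc; exists F, G1; split => //.
have G1F : G1 != F by case: aFG1 => _ _; rewrite eq_sym.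
set P := [seq A <- q | A \notin S].
have [H [HS HF HC]] : exists H, [/\ H \in S, H != F &
    forall x, x \in key H -> Defs.closure (Kset P) (vars F) x].
  apply: NNPP => Hn.
  have sub : forall y, Defs.closure (Kset (remove q F)) (vars F) y ->
      Defs.closure (Kset P) (vars F) y.
    move=> y; elim => [x xZ | f y' fK _ IH yf]; first exact: cl_base.
    case/mapP: fK => A; rewrite mem_filter => /andP [AF Aq] fE; subst f.
    case: (boolP (A \in S)) => AS.
      by exfalso; apply: Hn; exists A; split.
    apply: (cl_step (f := (key A, vars A))) => //.
    by apply/mapP; exists A => //; rewrite mem_filter AS Aq.
  apply: Hn; exists G1; split => // x xk.
  by apply: sub; apply: closure_remove; apply: weak.
exists H => //.
have Fq := Sq _ FS; have Hq := Sq _ HS.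
split => //; first by rewrite eq_sym.
move=> u uk.
case: (boolP (u \in vars F)) => uZ; first exact: cl_base.
apply: sat.
have [Fs [sP v c]] := closure_seq (HC u uk).
have FsS : forall A, A \in Fs -> A \in q /\ A \notin S.
  by move=> A /sP; rewrite mem_filter => /andP [].
split; last by exists F.
exists Fs; split.
  split => //.
  - by move=> A /FsS [].
  - move: c; rewrite mem_cat (negbTE uZ) /= => /flattenP [s /mapP [A AFs ->] uA].
    by exists A.
move=> A x AFs xin att.
have [Aq AnS] := FsS A AFs.
move: xin; rewrite inE => /orP [/eqP xu | xF].
  subst x.
  have AH : A != H by apply/eqP => e; subst A; rewrite HS in AnS.
  exact: (init A H Aq AnS HS (attvar_attacks Aq Hq AH (key_sub_vars uk) att)).
have AF : A != F by apply/eqP => e; subst A; rewrite FS in AnS.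
exact: (init A F Aq AnS FS (attvar_attacks Aq Fq AF xF att)).
Qed.
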